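(* For $\theta\in(-2\pi,2\pi)$ define $$f(\theta)=8\cosh^{-1}\!\left(\frac{\cos\left(\frac{\pi}{4}\right)+\cos^2\left(\frac{\pi}{4}+\frac{\theta}{16}\right)}{\sin^2\left(\frac{\pi}{4}+\frac{\theta}{16}\right)}\right)+8\cosh^{-1}\!\left(\frac{\cos\left(\frac{\pi}{4}\right)+\cos^2\left(\frac{\pi}{4}-\frac{\theta}{16}\right)}{\sin^2\left(\frac{\pi}{4}-\frac{\theta}{16}\right)}\right),$$ which is the sum of the perimeters of the regular hyperbolic octagons of areas $2\pi-\theta$ and $2\pi+\theta$. Then $f(\theta)\geq 2\cdot 8\cosh^{-1}(\sqrt{2}+1)$ for all $\theta\in(-2\pi,2\pi)$. *)

(* Defs.v *)
From Stdlib Require Import Reals.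
Open Scope R_scope.

Definition arcosh (x : R) : R := ln (x + sqrt (x ^ 2 - 1)).

Definition perim_sum (theta : R) : R :=
  8 * arcosh ((cos (PI / 4) + (cos (PI / 4 + theta / 16)) ^ 2)
               / (sin (PI / 4 + theta / 16)) ^ 2)
  + 8 * arcosh ((cos (PI / 4) + (cos (PI / 4 - theta / 16)) ^ 2)
               / (sin (PI / 4 - theta / 16)) ^ 2).

(* Main.v *)
Require Import Defs.
From Stdlib Require Import Reals Lra Psatz.
Open Scope R_scope.

Lemma sum_arcosh (X Y k : R) : 1<=X -> 1<=Y -> 1<=k ->
  X*Y + sqrt(X^2-1)*sqrt(Y^2-1) >= 2*k^2-1 -> arcosh X + arcosh Y >= 2*arcosh k.
Proof.
intros hX hY hk H. unfold arcosh.
assert (hA := sqrt_pos (X^2-1)). assert (hB := sqrt_pos (Y^2-1)). assert (hK := sqrt_pos (k^2-1)).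
assert (eA : sqrt (X^2-1) * sqrt (X^2-1) = X^2-1) by (apply sqrt_sqrt; nra).
assert (eB : sqrt (Y^2-1) * sqrt (Y^2-1) = Y^2-1) by (apply sqrt_sqrt; nra).
assert (eK : sqrt (k^2-1) * sqrt (k^2-1) = k^2-1) by (apply sqrt_sqrt; nra).
set (A := sqrt (X^2-1)) in *. set (B := sqrt (Y^2-1)) in *. set (K := sqrt (k^2-1)) in *.
rewrite <- ln_mult by lra.
replace (2 * ln (k+K)) with (ln ((k+K)*(k+K))) by (rewrite ln_mult by lra; ring).
apply Rle_ge.
assert (Hle : (k+K)*(k+K) <= (X+A)*(Y+B)).
{set (m := (X+A)*(Y+B)). set (m' := (X-A)*(Y-B)). set (t := (k+K)*(k+K)). set (t' := (k-K)*(k-K)).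
assert (e1 : m*m' = 1). { unfold m, m'. replace ((X + A) * (Y + B) * ((X - A) * (Y - B))) with ((X*X-A*A)*(Y*Y-B*B)) by ring. nra. }
assert (e2 : t*t' = 1). { unfold t, t'. replace ((k + K) * (k + K) * ((k - K) * (k - K))) with ((k*k-K*K)*(k*k-K*K)) by ring. nra. }
assert (e3 : m + m' >= t + t'). { unfold m, m', t, t'. nra. }
assert (hm : m >= 1). { unfold m. nra. }
assert (ht : t >= 1). { unfold t. nra. }
destruct (Rle_or_lt t m) as [h|h]; [exact h|].
exfalso.
assert (e4 : m*t*(m'-t') = t - m) by (replace (m*t*(m'-t')) with (t*(m*m') - m*(t*t')) by ring; rewrite e1, e2; ring).
assert (h5 : m'-t' >= t-m) by lra.
assert (h6 : m*t*(m'-t') >= m*t*(t-m)) by (apply Rle_ge, Rmult_le_compat_l; nra).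
assert (h7 : (t-m)*(1 - m*t) >= 0) by nra.
assert (h8 : m*t > 1) by nra.
nra. }
destruct (Rle_lt_or_eq_dec _ _ Hle) as [h|h]; [left; apply ln_increasing; nra| rewrite h; right; reflexivity].
Qed.
Lemma core (c P Q X Y : R) : 0 < c -> c*c = 1/2 -> 0 < P -> 0 < Q -> P + Q = 1 -> 8*(P*Q) >= 1 ->
  X*P = c + Q -> Y*Q = c + P ->
  1 <= X /\ 1 <= Y /\ X*Y + sqrt(X^2-1)*sqrt(Y^2-1) >= 2*(2*c+1)^2-1.
Proof.
intros hc hcc hP hQ hPQ h8 eX eY.
assert (hd : (P-Q)*(P-Q) <= c*c) by nra.
assert (hd1 : P - Q <= c) by nra.
assert (hd2 : Q - P <= c) by nra.
assert (hX : 1 <= X) by nra.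
assert (hY : 1 <= Y) by nra.
split; [exact hX|split; [exact hY|]].
remember (P*Q) as p eqn:Ep.
assert (hp : 0 < p) by (nra).
assert (hp4 : 4*p <= 1) by (pose proof (pow2_ge_0 (P-Q)); nra).
assert (hD0 : 0 <= 4*p - 1/2) by lra.
assert (eD : sqrt (4*p-1/2) * sqrt (4*p-1/2) = 4*p-1/2) by (apply sqrt_sqrt; lra).
assert (hD := sqrt_pos (4*p-1/2)).
set (D := sqrt (4*p-1/2)) in *.
assert (hZ1 := sqrt_pos (X^2-1)). assert (hZ2 := sqrt_pos (Y^2-1)).
assert (e1 : sqrt (X^2-1) * sqrt (X^2-1) = X^2-1) by (apply sqrt_sqrt; nra).
assert (e2 : sqrt (Y^2-1) * sqrt (Y^2-1) = Y^2-1) by (apply sqrt_sqrt; nra).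
set (Z := sqrt (X^2-1) * sqrt (Y^2-1)).
assert (hZ : 0 <= Z) by (unfold Z; nra).
assert (eZ2 : Z*Z = (X^2-1)*(Y^2-1)).
{ unfold Z. replace (sqrt (X ^ 2 - 1) * sqrt (Y ^ 2 - 1) * (sqrt (X ^ 2 - 1) * sqrt (Y ^ 2 - 1))) with ((sqrt (X ^ 2 - 1) * sqrt (X ^ 2 - 1)) * (sqrt (Y ^ 2 - 1) * sqrt (Y ^ 2 - 1))) by ring. rewrite e1, e2. ring. }
assert (eM : (X^2-1)*(Y^2-1)*(p*p) = (c+1)*(c+1)*(4*p-1/2)).
{ replace ((X^2-1)*(Y^2-1)*(p*p)) with ((X*P-P)*(X*P+P)*((Y*Q-Q)*(Y*Q+Q))) by (rewrite Ep; ring).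
  rewrite eX, eY. replace (c + Q + P) with (c+1) by lra. replace (c+P+Q) with (c+1) by lra.
  replace (4*p) with (1 - (P-Q)*(P-Q)) by (nra). nra. }
assert (eZ : Z*p = (c+1)*D).
{ assert (hsq : (Z*p)*(Z*p) = ((c+1)*D)*((c+1)*D)).
  { replace ((Z*p)*(Z*p)) with ((Z*Z)*(p*p)) by ring. rewrite eZ2, eM.
    replace ((c+1)*D*((c+1)*D)) with ((c+1)*(c+1)*(D*D)) by ring. rewrite eD. ring. }
  assert (0 <= Z*p) by nra. assert (0 <= (c+1)*D) by nra. nra. }
assert (hDge : D >= 8*c*p - c).
{ destruct (Rle_or_lt (8*c*p - c) 0) as [h|h]; [lra|].
  assert (hq : (8*c*p-c)*(8*c*p-c) <= D*D).
  { rewrite eD. replace ((8*c*p-c)*(8*c*p-c)) with (64*(c*c)*(p*p) - 16*(c*c)*p + c*c) by ring.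
    rewrite hcc. nra. }
  nra. }
assert (eXY : X*Y*p = c*c + c + p).
{ replace (X*Y*p) with ((X*P)*(Y*Q)) by (rewrite Ep; ring). rewrite eX, eY.
  rewrite Ep. nra. }
assert (goalp : (X*Y + Z)*p >= (2*(2*c+1)^2-1)*p).
{ replace ((X*Y+Z)*p) with (X*Y*p + Z*p) by ring. rewrite eXY, eZ.
  replace ((2*(2*c+1)^2-1)*p) with ((8*(c*c) + 8*c + 1)*p) by ring. rewrite hcc. nra. }
apply Rle_ge. apply Rmult_le_reg_r with p; [exact hp| lra].
Qed.

Theorem lemma4p2 (theta : R) (h1 : -2 * PI < theta) (h2 : theta < 2 * PI) :
  perim_sum theta >= 2 * (8 * arcosh (sqrt 2 + 1)).
Proof.
unfold perim_sum.
replace (PI / 4 - theta / 16) with (PI/2 - (PI / 4 + theta / 16)) by field.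
rewrite sin_shift, cos_shift.
set (a := PI / 4 + theta / 16).
set (c := cos (PI/4)).
assert (hs2 : sqrt 2 * sqrt 2 = 2) by (apply sqrt_sqrt; lra).
assert (hs0 : 0 < sqrt 2) by (apply sqrt_lt_R0; lra).
assert (ec : c = 1 / sqrt 2) by (unfold c; apply cos_PI4).
assert (hc : 0 < c) by (rewrite ec; apply Rdiv_lt_0_compat; lra).
assert (hcc : c*c = 1/2) by (rewrite ec; replace (1/sqrt 2 * (1/sqrt 2)) with (1/(sqrt 2 * sqrt 2)) by (field; lra); rewrite hs2; reflexivity).
assert (e2 : sqrt 2 = 2*c) by (rewrite ec; replace 2 with (sqrt 2 * sqrt 2) at 2 by exact hs2; field; lra).
assert (hPQ : sin a ^ 2 + cos a ^ 2 = 1) by (pose proof (sin2_cos2 a); unfold Rsqr in *; lra).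
assert (hcos : 0 < cos (theta/4)) by (apply cos_gt_0; lra).
assert (e8 : 2 * sin a * cos a = cos (theta/8)).
{ rewrite <- sin_2a, cos_sin. f_equal. unfold a. field. }
assert (e4 : cos (theta/4) = 2 * cos (theta/8) * cos (theta/8) - 1).
{ rewrite <- cos_2a_cos. f_equal. field. }
assert (h8 : 8 * (sin a ^ 2 * cos a ^ 2) >= 1).
{ replace (8 * (sin a ^ 2 * cos a ^ 2)) with (2 * ((2*sin a * cos a) * (2 * sin a * cos a))) by ring.
  rewrite e8. lra. }
assert (hP : 0 < sin a ^ 2) by (assert (0 <= sin a ^ 2) by apply pow2_ge_0; assert (0 <= cos a ^ 2) by apply pow2_ge_0; nra).
assert (hQ : 0 < cos a ^ 2) by (assert (0 <= sin a ^ 2) by apply pow2_ge_0; assert (0 <= cos a ^ 2) by apply pow2_ge_0; nra).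
destruct (core c (sin a ^ 2) (cos a ^ 2) ((c + cos a ^ 2) / sin a ^ 2) ((c + sin a ^ 2) / cos a ^ 2)
  hc hcc hP hQ hPQ h8) as [hX [hY hS]].
{ unfold Rdiv; rewrite Rmult_assoc, Rinv_l; [ring|lra]. }
{ unfold Rdiv; rewrite Rmult_assoc, Rinv_l; [ring|lra]. }
rewrite e2.
assert (H := sum_arcosh _ _ (2*c+1) hX hY ltac:(lra) hS).
lra.
Qed.
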